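(* Let $\mathcal{R},\mathcal{R}_1,\ldots,\mathcal{R}_s,\mathcal{C},\mathcal{C}_1,\ldots,\mathcal{C}_t$ be partitions of $\{1,\ldots,n\}$ such that $\mathcal{R}$ is finer than each $\mathcal{R}_i$ and $\mathcal{C}$ is finer than each $\mathcal{C}_j$. Then \[ \mathcal{L}(\mathcal{R}_i\times\mathcal{C}:\ 1\le i\le s)\cap\mathcal{L}(\mathcal{R}\times\mathcal{C}_j:\ 1\le j\le t)=\mathcal{L}(\mathcal{R}_i\times\mathcal{C}_j:\ 1\le i\le s,\ 1\le j\le t). \]
   Context: $S_n$ is the group of permutations of $\{1,\ldots,n\}$. A partition $\mathcal{Z}$ is finer than $\mathcal{W}$ if every block of $\mathcal{Z}$ lies in some block of $\mathcal{W}$. For partitions $\mathcal{R}=(R_i)$, $\mathcal{C}=(C_j)$ of $\{1,\ldots,n\}$, the product partition $\mathcal{R}\times\mathcal{C}=(R_i\times C_j)$ of the $n\times n$ board has marginal $|\pi_{\mathcal{R}\times\mathcal{C}}|=(t_{ij})$, $t_{ij}=|\{s:(s,\pi(s))\in R_i\times C_j\}|$, for $\pi\in S_n$. $U^{\mathcal{B}}=\{v\in\mathbb{R}^{S_n}: |\pi_{\mathcal{B}}|=|\sigma_{\mathcal{B}}|\Rightarrow v(\pi)=v(\sigma)\}$. The log-linear model $\mathcal{L}(\mathcal{B}_1,\ldots,\mathcal{B}_m)$ is the set of strictly positive probability distributions $p$ on $S_n$ with $\log p\in\mathrm{Span}(U^{\mathcal{B}_1},\ldots,U^{\mathcal{B}_m})$.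 *)

(* Defs.v *)
From mathcomp Require Import all_boot all_fingroup.
From Stdlib Require Import Reals.
Set Implicit Arguments. Unset Strict Implicit. Unset Printing Implicit Defensive.

(* A partition of {1,...,n} (indexed as 'I_n = {0,...,n-1}). *)
Definition is_partition (n : nat) (P : {set {set 'I_n}}) : Prop :=
  partition P [set: 'I_n].

Definition finer (n : nat) (Z W : {set {set 'I_n}}) : Prop :=
  forall A, A \in Z -> exists2 B, B \in W & A \subset B.

(* Entry t_{A,B} of the marginal |pi_{Rp x Cp}|: number of s with
   (s, pi s) in A x B. *)
Definition marg (n : nat) (pi : 'S_n) (A B : {set 'I_n}) : nat :=
  #|[set s in A | pi s \in B]|.

Definition same_marg (n : nat) (Rp Cp : {set {set 'I_n}}) (pi sigma : 'S_n) : Prop :=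
  forall A B, A \in Rp -> B \in Cp -> marg pi A B = marg sigma A B.

Definition U (n : nat) (Rp Cp : {set {set 'I_n}}) (v : 'S_n -> R) : Prop :=
  forall pi sigma : 'S_n, same_marg Rp Cp pi sigma -> v pi = v sigma.

Definition in_span (n : nat) (Bs : seq ({set {set 'I_n}} * {set {set 'I_n}}))
  (f : 'S_n -> R) : Prop :=
  exists (k : nat) (c : nat -> R) (v : nat -> 'S_n -> R),
    (forall i, (i < k)%N -> exists2 B, B \in Bs & U B.1 B.2 (v i)) /\
    (forall pi, f pi = \big[Rplus/0%R]_(i < k) (c i * v i pi)%R).

(* Log-linear model L(B_1,...,B_m) with B_i product partitions. *)
Definition loglin (n : nat) (Bs : seq ({set {set 'I_n}} * {set {set 'I_n}}))
  (p : 'S_n -> R) : Prop :=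
  (forall pi, (0 < p pi)%R) /\
  \big[Rplus/0%R]_(pi : 'S_n) p pi = 1%R /\
  in_span Bs (fun pi => ln (p pi)).

(* Main.v *)
From HB Require Import structures.
Require Import Defs.
From mathcomp Require Import all_boot all_fingroup.
From Stdlib Require Import Reals.
From Stdlib Require Import Lra FunctionalExtensionality.

Module Aux.
Set Implicit Arguments. Unset Strict Implicit. Unset Printing Implicit Defensive.
Local Open Scope R_scope.


Lemma RplusA : associative Rplus. Proof. move=> x y z; lra. Qed.
Lemma RmultDl : left_distributive Rmult Rplus. Proof. move=> x y z; lra. Qed.
Lemma RmultDr : right_distributive Rmult Rplus. Proof. move=> x y z; lra. Qed.
HB.instance Definition _ := Monoid.isComLaw.Build R 0 Rplus RplusA Rplus_comm Rplus_0_l.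
HB.instance Definition _ := Monoid.isMulLaw.Build R 0 Rmult Rmult_0_l Rmult_0_r.
HB.instance Definition _ := Monoid.isAddLaw.Build R Rmult Rplus RmultDl RmultDr.

Section Lin.
Variable T : finType.
Definition inner (a b : T -> R) := \big[Rplus/0]_(x : T) (a x * b x).

Lemma inner_addl a b c : inner (fun x => a x + b x) c = inner a c + inner b c.
Proof. rewrite /inner -big_split /=; apply: eq_bigr => x _; lra. Qed.
Lemma inner_scal k a b : inner (fun x => k * a x) b = k * inner a b.
Proof. rewrite /inner big_distrr /=; apply: eq_bigr => x _; lra. Qed.
Lemma inner_sym a b : inner a b = inner b a.
Proof. rewrite /inner; apply: eq_bigr => x _; lra. Qed.
Lemma inner_opp a b : inner (fun x => - a x) b = - inner a b.
Proof. have -> : - inner a b = (-1) * inner a b by lra.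
  rewrite -inner_scal /inner; apply: eq_bigr => x _; lra. Qed.
Lemma inner_sub a b c : inner (fun x => a x - b x) c = inner a c - inner b c.
Proof. rewrite /Rminus -inner_opp -inner_addl //. Qed.

Lemma inner_self_eq0 a : inner a a = 0 -> forall x, a x = 0.
Proof.
rewrite /inner => H x.
have Hpos : forall (r : seq T), 0 <= \big[Rplus/0]_(y <- r) (a y * a y).
  elim=> [|y r IH]; rewrite ?big_nil ?big_cons; first lra.
  have := Rle_0_sqr (a y); rewrite /Rsqr; lra.
rewrite (bigD1 x) //= in H.
have H2 : 0 <= \big[Rplus/0]_(y | y != x) (a y * a y).
  rewrite big_mkcond /=. 
  elim: (index_enum T) => [|y r IH]; rewrite ?big_nil ?big_cons; first lra.
  case: (y != x); have := Rle_0_sqr (a y); rewrite /Rsqr; lra.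
have H3 := Rle_0_sqr (a x); rewrite /Rsqr in H3.
have : a x * a x = 0 by lra.
by move/Rmult_integral => [].
Qed.

Inductive spanI (S : (T -> R) -> Prop) : (T -> R) -> Prop :=
 | sp0 : spanI S (fun _ => 0)
 | spadd : forall a w c, spanI S a -> S w -> spanI S (fun x => a x + c * w x).

Lemma spanI_gen S w : S w -> spanI S w.
Proof.
move=> Sw; have := spadd 1 (sp0 S) Sw.
have -> : (fun x => 0 + 1 * w x) = w by apply: functional_extensionality => x; lra.
done.
Qed.

Lemma spanI_add S a b : spanI S a -> spanI S b -> spanI S (fun x => a x + b x).
Proof.
move=> Ha; elim=> [|b' w c Hb IH Sw].
  have -> : (fun x => a x + 0) = a by apply: functional_extensionality => x; lra.
  done.
have := spadd c IH Sw.
have -> : (fun x => a x + b' x + c * w x) = (fun x => a x + (b' x + c * w x)) by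
  apply: functional_extensionality => x; lra.
done.
Qed.

Lemma spanI_scal S k a : spanI S a -> spanI S (fun x => k * a x).
Proof.
elim=> [|a' w c Ha IH Sw].
  have -> : (fun x : T => k * 0) = (fun _ => 0) by apply: functional_extensionality => x; lra.
  exact: sp0.
have := spadd (k * c) IH Sw.
have -> : (fun x => k * a' x + k * c * w x) = (fun x => k * (a' x + c * w x)) by
  apply: functional_extensionality => x; lra.
done.
Qed.

Lemma spanI_mono S S' a : (forall w, S w -> spanI S' w) -> spanI S a -> spanI S' a.
Proof.
move=> HS; elim=> [|a' w c Ha IH Sw]; first exact: sp0.
by apply: spanI_add => //; apply: spanI_scal; apply: HS.
Qed.

Lemma spanI_lin S S' (F : (T -> R) -> (T -> R)) a :
  F (fun _ => 0) = (fun _ => 0) ->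
  (forall a w c, F (fun x => a x + c * w x) = (fun x => F a x + c * F w x)) ->
  (forall w, S w -> spanI S' (F w)) -> spanI S a -> spanI S' (F a).
Proof.
move=> F0 Flin HS; elim=> [|a' w c Ha IH Sw]; first by rewrite F0; exact: sp0.
by rewrite Flin; apply: spanI_add => //; apply: spanI_scal; apply: HS.
Qed.

Lemma inner_span S x a : (forall w, S w -> inner x w = 0) -> spanI S a -> inner x a = 0.
Proof.
move=> HS; elim=> [|a' w c Ha IH Sw].
  by rewrite /inner big1 // => y _; lra.
rewrite inner_sym inner_addl inner_scal !(inner_sym _ x) IH HS //; lra.
Qed.

Lemma proj_uniq S x a b : spanI S a -> spanI S b ->
  (forall w, S w -> inner (fun y => x y - a y) w = 0) ->
  (forall w, S w -> inner (fun y => x y - b y) w = 0) -> a = b.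
Proof.
move=> Ha Hb H1 H2.
have Hd : spanI S (fun y => a y - b y).
  have := spanI_add Ha (spanI_scal (-1) Hb).
  by have -> : (fun x => a x + -1 * b x) = (fun y => a y - b y) by
    apply: functional_extensionality => y; lra.
have : inner (fun y => a y - b y) (fun y => a y - b y) = 0.
  apply: (inner_span (S := S)) => // w Sw.
  have -> : (fun y => a y - b y) = (fun y => (x y - b y) - (x y - a y)) by
    apply: functional_extensionality => y; lra.
  by rewrite inner_sub H1 // H2 //; lra.
move/inner_self_eq0 => H; apply: functional_extensionality => y; have := H y; lra.
Qed.

Lemma GS (ws : list (T -> R)) : exists P : (T -> R) -> (T -> R),
  (forall x, spanI (fun w => List.In w ws) (P x)) /\
  (forall x w, List.In w ws -> inner (fun y => x y - P x y) w = 0).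
Proof.
elim: ws => [|w ws [Q [HQs HQo]]].
  by exists (fun _ _ => 0); split; [move=> x; exact: sp0 | move=> x w []].
have mono : forall a, spanI (fun w' => List.In w' ws) a -> spanI (fun w' => List.In w' (w :: ws)) a.
  move=> a; apply: spanI_mono => w' Hw'; apply: spanI_gen; by right.
pose r := fun y => w y - Q w y.
have Hr : spanI (fun w' => List.In w' (w :: ws)) r.
  have := spanI_add (spanI_gen (S := fun w' => List.In w' (w :: ws)) (or_introl erefl))
     (spanI_scal (-1) (mono _ (HQs w))).
  by have -> : (fun x => w x + -1 * Q w x) = r by
    apply: functional_extensionality => y; rewrite /r; lra.
have rperp : forall w', List.In w' ws -> inner r w' = 0 by move=> w' Hw'; exact: HQo.
case: (Req_dec (inner r r) 0) => Hrr.
  have r0 := inner_self_eq0 Hrr.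
  exists Q; split; first by move=> x; apply: mono.
  move=> x w' [<-|Hw']; last exact: HQo.
  have -> : w = (fun y => Q w y + r y) by apply: functional_extensionality => y; rewrite /r; lra.
  rewrite inner_sym inner_addl !(inner_sym _ (fun y => x y - Q x y)).
  rewrite (inner_span (S := fun w' => List.In w' ws)) //; last by move=> w'' Hw''; apply: HQo.
  have -> : r = (fun _ => 0) by apply: functional_extensionality.
  rewrite /inner big1; [lra | move=> y _; lra].
pose al := fun x => inner (fun y => x y - Q x y) r / inner r r.
exists (fun x y => Q x y + al x * r y); split.
  by move=> x; apply: spanI_add; [apply: mono | apply: spanI_scal].
have key : forall x w', List.In w' ws -> inner (fun y => x y - (Q x y + al x * r y)) w' = 0.
  move=> x w' Hw'.
  have -> : (fun y => x y - (Q x y + al x * r y)) = (fun y => (x y - Q x y) - al x * r y)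
    by apply: functional_extensionality => y; lra.
  by rewrite inner_sub inner_scal HQo // rperp //; lra.
move=> x w' [<-|Hw']; last exact: key.
have -> : w = (fun y => r y + 1 * Q w y) by apply: functional_extensionality => y; rewrite /r; lra.
rewrite inner_sym inner_addl inner_scal !(inner_sym _ (fun y => x y - (Q x y + al x * r y))).
rewrite (inner_span (S := fun w' => List.In w' ws) _ (HQs w)); last by move=> w'' Hw''; apply: key.
have -> : (fun y => x y - (Q x y + al x * r y)) = (fun y => (x y - Q x y) - al x * r y)
    by apply: functional_extensionality => y; lra.
rewrite inner_sub inner_scal /al; field_simplify; [lra| exact: Hrr].
Qed.
End Lin.

Lemma cnt (T : finType) (K : eqType) (F : T -> K) k : count_mem k (map F (enum T)) = #|[pred x | F x == k]|.
Proof. rewrite count_map cardE /enum_mem size_filter count_filter; apply: eq_count => x /=.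
rewrite !inE; by case: (F x == k). Qed.

Section Perm.
Variable n : nat.
Implicit Types P Q : {set {set 'I_n}}.

Definition Hs P : {set 'S_n} := [set h : 'S_n | [forall x, pblock P (h x) == pblock P x]].
Definition RI P (v : 'S_n -> R) := forall pi h, h \in Hs P -> v (h * pi)%g = v pi.
Definition LI Q (v : 'S_n -> R) := forall pi g, g \in Hs Q -> v (pi * g)%g = v pi.

Lemma HsP P (h : 'S_n) : reflect (forall x, pblock P (h x) = pblock P x) (h \in Hs P).
Proof. rewrite inE; apply: (iffP forallP) => H x; [exact/eqP | exact/eqP]. Qed.

Lemma Hs1 P : (1 : 'S_n)%g \in Hs P.
Proof. by apply/HsP => x; rewrite perm1. Qed.
Lemma HsM P (g h : 'S_n) : g \in Hs P -> h \in Hs P -> (g * h)%g \in Hs P.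
Proof. move=> /HsP Hg /HsP Hh; apply/HsP => x; by rewrite permM Hh Hg. Qed.
Lemma HsV P (g : 'S_n) : g \in Hs P -> (g^-1)%g \in Hs P.
Proof. move=> /HsP Hg; apply/HsP => x; by rewrite -{2}(permKV g x) Hg. Qed.
Lemma HsMl P (g h : 'S_n) : g \in Hs P -> ((g * h)%g \in Hs P) = (h \in Hs P).
Proof.
move=> Hg; apply/idP/idP => [Hgh|Hh]; last exact: HsM.
by rewrite -(mulKg g h); apply: HsM => //; apply: HsV.
Qed.

Lemma inblock P A x : is_partition P -> A \in P -> (x \in A) = (pblock P x == A).
Proof.
case/and3P => /eqP cov triv _ AP; apply/idP/eqP => [xA|<-].
  exact: def_pblock.
by rewrite mem_pblock cov inE.
Qed.

Lemma pblockP P x : is_partition P -> pblock P x \in P.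
Proof. case/and3P => /eqP cov _ _; apply: pblock_mem; by rewrite cov inE. Qed.

Lemma finer_Hs P P' : is_partition P -> is_partition P' -> finer P P' ->
  forall g, g \in Hs P -> g \in Hs P'.
Proof.
move=> pP pP' fin g /HsP Hg; apply/HsP => x.
have [B BP' sub] := fin _ (pblockP x pP).
have xB : x \in B by apply: (subsetP sub); rewrite (inblock _ pP (pblockP x pP)).
have gxB : g x \in B by apply: (subsetP sub); rewrite (inblock _ pP (pblockP x pP)) Hg.
move: xB gxB; rewrite !(inblock _ pP' BP') => /eqP -> /eqP -> //.
Qed.

Lemma Uchar P Q v : is_partition P -> is_partition Q -> U P Q v <-> RI P v /\ LI Q v.
Proof.
move=> pP pQ; split.
  move=> HU; split.
    move=> pi h /HsP Hh; apply: HU => A B AP BQ; rewrite /marg.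
    have -> : [set s in A | (h * pi)%g s \in B] = h @^-1: [set s in A | pi s \in B].
      apply/setP => x; rewrite !inE permM (inblock x pP AP) (inblock (h x) pP AP) Hh //.
    by rewrite card_preimset //; apply: perm_inj.
  move=> pi g /HsP Hg; apply: HU => A B AP BQ; rewrite /marg.
  apply: eq_card => x; rewrite !inE permM (inblock (g (pi x)) pQ BQ) (inblock (pi x) pQ BQ) Hg //.
move=> [HR HL] pi sigma Hm.
pose al := fun s : 'I_n => (pblock P s, pblock Q (sigma s)).
pose be := fun s : 'I_n => (pblock P s, pblock Q (pi s)).
have Hpe : perm_eq [tuple al i | i < n] [tuple be i | i < n].
  apply/allP => k _; apply/eqP; rewrite !cnt.
  case: k => A B.
  case AP : (A \in P); last first.
    rewrite !eq_card0 // => x; rewrite !inE /= xpair_eqE;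
      apply/negP => /andP [/eqP e _]; by move: (pblockP x pP); rewrite e AP.
  case BQ : (B \in Q); last first.
    rewrite !eq_card0 // => x; rewrite !inE /= xpair_eqE;
      apply/negP => /andP [_ /eqP e];
      move: (pblockP (pi x) pQ) (pblockP (sigma x) pQ); by rewrite e BQ.
  have := Hm A B AP BQ; rewrite /marg => e.
  transitivity #|[set s in A | sigma s \in B]|.
    apply: eq_card => x; rewrite !inE /= xpair_eqE (inblock x pP AP) (inblock (sigma x) pQ BQ) //.
  rewrite -e; apply: eq_card => x; rewrite !inE /= xpair_eqE (inblock x pP AP) (inblock (pi x) pQ BQ) //.
case/tuple_permP: Hpe => p Hp.
have Hp' : forall i, al i = be (p i).
  move=> i; have := congr1 (fun t => tnth t i) (val_inj Hp); by rewrite !tnth_mktuple.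
pose g := ((p * pi)^-1 * sigma)%g.
have eq : sigma = (p * pi * g)%g by rewrite /g mulgA mulgV mul1g.
have pH : p \in Hs P by apply/HsP => x; have := Hp' x; case=> ->.
have gH : g \in Hs Q.
  apply/HsP => y; rewrite /g permM.
  set s := ((p * pi)^-1)%g y.
  have ys : y = pi (p s) by rewrite -permM /s permKV.
  by have := Hp' s; case=> _ ->; rewrite ys.
by rewrite eq HL // HR.
Qed.

End Perm.

Lemma In_enum (T : finType) (x : T) : List.In x (enum T).
Proof.
have : x \in enum T by rewrite mem_enum.
elim: (enum T) => [|y r IH] //=; rewrite in_cons => /orP [/eqP ->|/IH]; by [left|right].
Qed.

Lemma spanI_list (T : finType) S (f : T -> R) : spanI S f ->
  exists vs, (forall v, List.In v vs -> S v) /\ spanI (fun w => List.In w vs) f.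
Proof.
elim=> [|a w c Ha [vs [Hvs Hsp]] Sw].
  by exists nil; split => //; exact: sp0.
exists (w :: vs); split; first by move=> v [<-|/Hvs].
apply: spadd; last by left.
by apply: spanI_mono Hsp => v Hv; apply: spanI_gen; right.
Qed.

Lemma iterR k x : iter k (Rplus x) 0 = INR k * x.
Proof. elim: k => [|k IH]; first by rewrite /=; lra. rewrite iterS IH S_INR; lra. Qed.

Section Main.
Variable n : nat.
Definition Tr (g : 'S_n) (v : 'S_n -> R) := fun pi => v (pi * g)%g.
Definition Avg (Q : {set {set 'I_n}}) (v : 'S_n -> R) :=
  fun pi => / INR #|Hs Q| * \big[Rplus/0]_(g in Hs Q) v (pi * g)%g.

Lemma inner_Tr g a b : inner (Tr g a) b = inner a (Tr (g^-1)%g b).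
Proof.
rewrite /inner /Tr (reindex_inj (mulIg (g^-1)%g)) /=.
by apply: eq_bigr => pi _; rewrite -mulgA mulVg mulg1.
Qed.

Lemma key s t (Rp : {set {set 'I_n}}) (Rs : 'I_s -> {set {set 'I_n}})
  (Cp : {set {set 'I_n}}) (Cs : 'I_t -> {set {set 'I_n}}) :
  is_partition Rp -> (forall i, is_partition (Rs i)) ->
  is_partition Cp -> (forall j, is_partition (Cs j)) ->
  forall f,
  spanI (fun w => exists i, U (Rs i) Cp w) f ->
  spanI (fun w => exists j, U Rp (Cs j) w) f ->
  spanI (fun w => exists i j, U (Rs i) (Cs j) w) f.
Proof.
move=> pR pRs pC pCs f HX HY.
case: (spanI_list HX) => vs [Hvs Hf].
pose ws := List.flat_map (fun v => List.map (fun g => Tr g v) (enum {perm 'I_n})) vs.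
have W1 : forall w, List.In w ws -> exists i, RI (Rs i) w.
  move=> w /List.in_flat_map [v [Hv /List.in_map_iff [g [<- _]]]].
  case: (Hvs v Hv) => i HU; exists i.
  have [HR _] := (Uchar v (pRs i) pC).1 HU.
  by move=> pi h Hh; rewrite /Tr -mulgA HR.
have W2 : forall w g, List.In w ws -> List.In (Tr g w) ws.
  move=> w g /List.in_flat_map [v [Hv /List.in_map_iff [g' [<- _]]]].
  apply/List.in_flat_map; exists v; split => //; apply/List.in_map_iff; exists (g * g')%g; split;
    last exact: In_enum.
  by apply: functional_extensionality => pi; rewrite /Tr mulgA.
have W3 : spanI (fun w => List.In w ws) f.
  apply: spanI_mono Hf => v Hv; apply: spanI_gen.
  have -> : v = Tr 1%g v by apply: functional_extensionality => pi; rewrite /Tr mulg1.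
  apply/List.in_flat_map; exists v; split => //; apply/List.in_map_iff; exists 1%g; split => //.
  exact: In_enum.
case: (GS ws) => P [HPs HPo].
have Puniq : forall x a, spanI (fun w => List.In w ws) a ->
    (forall w, List.In w ws -> inner (fun y => x y - a y) w = 0) -> P x = a.
  move=> x a Ha Ho; exact: (proj_uniq (HPs x) Ha (HPo x) Ho).
have Pf : P f = f.
  apply: Puniq => // w _; rewrite /inner big1 // => y _; lra.
have P0 : P (fun _ => 0) = (fun _ => 0).
  apply: Puniq; first exact: sp0.
  move=> w _; rewrite /inner big1 // => y _; lra.
have Plin : forall a w c, P (fun x => a x + c * w x) = (fun x => P a x + c * P w x).
  move=> a w c; apply: Puniq; first by apply: spanI_add => //; apply: spanI_scal.
  move=> w' Hw'.
  have -> : (fun y => a y + c * w y - (P a y + c * P w y)) =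
            (fun y => (a y - P a y) + c * (w y - P w y)) by
    apply: functional_extensionality => y; lra.
  rewrite inner_addl inner_scal !HPo //; lra.
have Pcomm : forall g x, P (Tr g x) = Tr g (P x).
  move=> g x; apply: Puniq.
    apply: (@spanI_lin _ _ _ (Tr g) _ _ _ _ (HPs x)).
    - by [].
    - by [].
    - by move=> w Hw; apply: spanI_gen; exact: W2.
  move=> w Hw.
  have -> : (fun y => Tr g x y - Tr g (P x) y) = Tr g (fun y => x y - P x y) by [].
  rewrite inner_Tr; apply: HPo; exact: W2.
have ClaimC : forall w, (exists j, U Rp (Cs j) w) ->
    spanI (fun w => exists i j, U (Rs i) (Cs j) w) (P w).
  move=> w [j HU]; have [_ HL] := (Uchar w pR (pCs j)).1 HU.
  have LIP : LI (Cs j) (P w).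
    move=> pi g Hg.
    have e : Tr g w = w by apply: functional_extensionality => y; rewrite /Tr HL.
    have H := congr1 (fun F => F pi) (Pcomm g w); rewrite e /Tr /= in H.
    by rewrite -H.
  have Hk : INR #|Hs (Cs j)| <> 0.
    apply: not_0_INR; apply/eqP; rewrite -lt0n; apply/card_gt0P; exists 1%g; exact: Hs1.
  have AvgE : Avg (Cs j) (P w) = P w.
    apply: functional_extensionality => pi.
    rewrite /Avg (eq_bigr (fun _ => P w pi)) => [|g Hg]; last exact: LIP.
    rewrite big_const iterR; field; exact: Hk.
  rewrite -AvgE.
  apply: (@spanI_lin _ _ _ (Avg (Cs j)) _ _ _ _ (HPs w)).
  - apply: functional_extensionality => pi; rewrite /Avg big1 //; lra.
  - move=> a w' c; apply: functional_extensionality => pi.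
    rewrite /Avg big_split /= -big_distrr /=; ring.
  - move=> w' Hw'; apply: spanI_gen.
    case: (W1 w' Hw') => i HRi; exists i, j.
    apply/(Uchar _ (pRs i) (pCs j)); split.
      move=> pi h Hh; rewrite /Avg; congr (_ * _).
      by apply: eq_bigr => g _; rewrite -mulgA; apply: HRi.
    move=> pi g' Hg'; rewrite /Avg; congr (_ * _).
    rewrite [RHS](reindex_inj (mulgI g')).
    by apply: eq_big => g; [rewrite HsMl | move=> _; rewrite mulgA].
have final := @spanI_lin _ _ _ P _ P0 Plin ClaimC HY.
by rewrite Pf in final.
Qed.
End Main.

Lemma in_span_spanI n (Bs : seq ({set {set 'I_n}} * {set {set 'I_n}})) f :
  in_span Bs f <-> spanI (fun w => exists2 B, B \in Bs & U B.1 B.2 w) f.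
Proof.
split.
  move=> [k [c [v [Hv Hf]]]].
  have -> : f = (fun pi => \big[Rplus/0%R]_(i < k) (c i * v i pi)).
    by apply: functional_extensionality => pi; rewrite Hf.
  suff H : forall m : nat, leq m k -> spanI (fun w => exists2 B, B \in Bs & U B.1 B.2 w)
      (fun pi => \big[Rplus/0%R]_(i < m) (c i * v i pi)) by apply: H.
  elim=> [|m IH] Hm.
    have -> : (fun pi => \big[Rplus/0%R]_(i < 0) (c i * v i pi)) = (fun _ => 0).
      by apply: functional_extensionality => pi; rewrite big_ord0.
    exact: sp0.
  have -> : (fun pi => \big[Rplus/0%R]_(i < m.+1) (c i * v i pi)) =
    (fun pi => \big[Rplus/0%R]_(i < m) (c i * v i pi) + c m * v m pi).
    by apply: functional_extensionality => pi; rewrite big_ord_recr.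
  apply: spadd; first by apply: IH; apply: ltnW.
  exact: Hv.
elim=> [|a w c0 Ha [k [c [v [Hv Hf]]]] Sw].
  exists 0%nat, (fun _ => 0), (fun _ _ => 0); split => // pi.
  by rewrite big_ord0.
exists k.+1, (fun m => if m == k then c0 else c m), (fun m => if m == k then w else v m).
split.
  move=> i Hi; case: eqP => [_|ne]; first by [].
  by apply: Hv; rewrite ltn_neqAle (introN eqP ne) -ltnS.
move=> pi; rewrite big_ord_recr /= eqxx Hf.
congr (_ + _); apply: eq_bigr => i _.
by rewrite (ltn_eqF (ltn_ord i)).
Qed.

Lemma corollary1_aux (n s t : nat)
  (Rp : {set {set 'I_n}}) (Rs : 'I_s -> {set {set 'I_n}})
  (Cp : {set {set 'I_n}}) (Cs : 'I_t -> {set {set 'I_n}}) :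
  is_partition Rp -> (forall i, is_partition (Rs i)) ->
  is_partition Cp -> (forall j, is_partition (Cs j)) ->
  (forall i, finer Rp (Rs i)) -> (forall j, finer Cp (Cs j)) ->
  forall p : 'S_n -> R,
    (loglin [seq (Rs i, Cp) | i <- enum 'I_s] p /\
     loglin [seq (Rp, Cs j) | j <- enum 'I_t] p)
    <-> loglin [seq (Rs i, Cs j) | i <- enum 'I_s, j <- enum 'I_t] p.
Proof.
move=> pR pRs pC pCs fR fC p; split.
  move=> [[pos [sum HX]] [_ [_ HY]]]; split => //; split => //.
  apply/in_span_spanI; move/in_span_spanI: HX => HX; move/in_span_spanI: HY => HY.
  have HX' : spanI (fun w => exists i, U (Rs i) Cp w) (fun pi => ln (p pi)).
    apply: spanI_mono HX => w [B /mapP [i _ ->] HU]; apply: spanI_gen; by exists i.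
  have HY' : spanI (fun w => exists j, U Rp (Cs j) w) (fun pi => ln (p pi)).
    apply: spanI_mono HY => w [B /mapP [j _ ->] HU]; apply: spanI_gen; by exists j.
  apply: spanI_mono (key pR pRs pC pCs HX' HY') => w [i [j HU]].
  apply: spanI_gen; exists (Rs i, Cs j) => //.
  by apply/allpairsP; exists (i, j); rewrite !mem_enum.
move=> [pos [sum HZ]]; move/in_span_spanI: HZ => HZ.
split; split => //; split => //; apply/in_span_spanI; apply: spanI_mono HZ;
  move=> w [B /allpairsP [[i j] [_ _ ->]] /= HU]; apply: spanI_gen.
  exists (Rs i, Cp); first by apply/mapP; exists i; rewrite ?mem_enum.
  have [HR HL] := (Uchar w (pRs i) (pCs j)).1 HU.
  apply/(Uchar w (pRs i) pC); split => // pi g Hg; apply: HL.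
  exact: finer_Hs (fC j) g Hg.
exists (Rp, Cs j); first by apply/mapP; exists j; rewrite ?mem_enum.
have [HR HL] := (Uchar w (pRs i) (pCs j)).1 HU.
apply/(Uchar w pR (pCs j)); split => // pi h Hh; apply: HR.
exact: finer_Hs (fR i) h Hh.
Qed.

End Aux.

Theorem corollary1 (n s t : nat)
  (Rp : {set {set 'I_n}}) (Rs : 'I_s -> {set {set 'I_n}})
  (Cp : {set {set 'I_n}}) (Cs : 'I_t -> {set {set 'I_n}}) :
  is_partition Rp -> (forall i, is_partition (Rs i)) ->
  is_partition Cp -> (forall j, is_partition (Cs j)) ->
  (forall i, finer Rp (Rs i)) -> (forall j, finer Cp (Cs j)) ->
  forall p : 'S_n -> R,
    (loglin [seq (Rs i, Cp) | i <- enum 'I_s] p /\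
     loglin [seq (Rp, Cs j) | j <- enum 'I_t] p)
    <-> loglin [seq (Rs i, Cs j) | i <- enum 'I_s, j <- enum 'I_t] p.
Proof. exact: Aux.corollary1_aux. Qed.
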